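(* Let $\mathsf{CPTP}_n$ be the class of all $n$-qubit quantum channels and let $\varepsilon<1/2$. Any online learner for $\mathsf{CPTP}_n$ makes $\Omega(2^n)$ many $\varepsilon$-mistakes against a worst-case adversary. This remains true even if the adversary is forced to decide on a channel before the interaction with the learner.
   Context: Online learning a class $\mathsf{C}$ of $n$-qubit channels: in each round the adversary presents a channel test operator $E_{A,B}$ (an operator $E_{A,B}\geq0$ on two $n$-qubit systems with $E_{A,B}\leq\sigma_A\otimes\mathbb{1}_B$ for some density operator $\sigma_A$), the learner outputs a prediction in $[0,1]$ based on past information, and then the adversary reveals the true value $\mathrm{Tr}[E_{A,B}C^{\mathcal{N}}_{A,B}]$ for the target channel $\mathcal{N}\in\mathsf{C}$, where $C^{\mathcal{N}}_{A,B}=\sum_{i,j}|i\rangle\langle j|\otimes\mathcal{N}(|i\rangle\langle j|)$. An $\varepsilon$-mistake is a round in which the prediction differs from the true value by more than $\varepsilon$. *)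

(* Defs.v *)
From HB Require Import structures.
From mathcomp Require Import all_boot all_order all_algebra.
From mathcomp Require Import reals.
From mathcomp Require Export complex mxtens.

Set Implicit Arguments.
Unset Strict Implicit.
Unset Printing Implicit Defensive.

Import Order.TTheory GRing.Theory Num.Theory.
Local Open Scope ring_scope.

Section QChannels.
Variable R : realType.
Local Notation C := (R[i]).

Definition dag {m p : nat} (A : 'M[C]_(m, p)) : 'M[C]_(p, m) :=
  (map_mx Num.conj A)^T.

Definition psd {m : nat} (A : 'M[C]_m) : Prop :=
  A = dag A /\ forall v : 'cV[C]_m, 0 <= (dag v *m A *m v) 0 0.

Definition loewner {m : nat} (A B : 'M[C]_m) : Prop := psd (B - A).

Definition density {m : nat} (s : 'M[C]_m) : Prop := psd s /\ \tr s = 1.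

Definition qdim (n : nat) : nat := 2 ^ n.

(* channel test operator on A (first factor) and B (second factor) *)
Definition channel_test (n : nat) (E : 'M[C]_(qdim n * qdim n)) : Prop :=
  psd E /\ exists s : 'M[C]_(qdim n), density s /\ loewner E (s *t 1%:M).

Definition blk {k d : nat} (X : 'M[C]_(k * d)) (i j : 'I_k) : 'M[C]_d :=
  \matrix_(a, b) X (mxtens_index (i, a)) (mxtens_index (j, b)).

(* (id_k (x) N) applied to X *)
Definition idtens {k d : nat} (N : 'M[C]_d -> 'M[C]_d) (X : 'M[C]_(k * d))
  : 'M[C]_(k * d) :=
  \matrix_(p, q) N (blk X (mxtens_unindex p).1 (mxtens_unindex q).1)
                   (mxtens_unindex p).2 (mxtens_unindex q).2.

Definition is_channel (n : nat) (N : 'M[C]_(qdim n) -> 'M[C]_(qdim n)) : Prop :=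
  [/\ (forall (a : C) (X Y : 'M[C]_(qdim n)), N (a *: X + Y) = a *: N X + N Y),
      (forall k (X : 'M[C]_(k * qdim n)), psd X -> psd (idtens N X))
    & (forall X, \tr (N X) = \tr X)].

Definition choi (n : nat) (N : 'M[C]_(qdim n) -> 'M[C]_(qdim n))
  : 'M[C]_(qdim n * qdim n) :=
  \sum_(i < qdim n) \sum_(j < qdim n) (delta_mx i j *t N (delta_mx i j)).

(* true value Tr[E C^N] (a real number for channel tests; we take Re) *)
Definition test_value (n : nat) (N : 'M[C]_(qdim n) -> 'M[C]_(qdim n))
  (E : 'M[C]_(qdim n * qdim n)) : R :=
  complex.Re (\tr (E *m choi N)).

(* a (deterministic) online learner: history of (test, revealed value) pairs
   and the current test |-> prediction *)
Definition learner (n : nat) :=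
  seq ('M[C]_(qdim n * qdim n) * R) -> 'M[C]_(qdim n * qdim n) -> R.

Fixpoint mistakes (n : nat) (L : learner n) (N : 'M[C]_(qdim n) -> 'M[C]_(qdim n))
  (eps : R) (h : seq ('M[C]_(qdim n * qdim n) * R))
  (Es : seq 'M[C]_(qdim n * qdim n)) : nat :=
  match Es with
  | [::] => 0%N
  | E :: Es' =>
      let v := test_value N E in
      (nat_of_bool (eps < `|L h E - v|)%R + mistakes L N eps (rcons h (E, v)) Es')%N
  end.

End QChannels.

(* Main.v *)
Require Import Defs.
From HB Require Import structures.
From mathcomp Require Import all_boot all_order all_algebra.
From mathcomp Require Import reals complex mxtens.
From mathcomp Require Import lra.
Import Order.TTheory GRing.Theory Num.Theory.
Local Open Scope ring_scope.
Set Implicit Arguments.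
Unset Strict Implicit.

Lemma dag_mul (R : realType) m p q (A : 'M[R[i]]_(m, p)) (B : 'M[R[i]]_(p, q)) :
  dag (A *m B) = dag B *m dag A.
Proof. by rewrite /dag map_mxM trmx_mul. Qed.

Lemma dagK (R : realType) m p (A : 'M[R[i]]_(m, p)) : dag (dag A) = A.
Proof. by apply/matrixP=> i j; rewrite /dag !mxE conjCK. Qed.

Lemma dagD (R : realType) m p (A B : 'M[R[i]]_(m, p)) : dag (A + B) = dag A + dag B.
Proof. by apply/matrixP=> i j; rewrite /dag !mxE rmorphD. Qed.

Lemma dag0 (R : realType) m p : dag (0 : 'M[R[i]]_(m, p)) = 0.
Proof. by apply/matrixP=> i j; rewrite /dag !mxE rmorph0. Qed.

Lemma psd0 (R : realType) m : psd (0 : 'M[R[i]]_m).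
Proof. by split; [rewrite dag0 | move=> v; rewrite mulmx0 mul0mx mxE]. Qed.

Lemma psdD (R : realType) m (A B : 'M[R[i]]_m) : psd A -> psd B -> psd (A + B).
Proof.
move=> [hA fA] [hB fB]; split; first by rewrite dagD -hA -hB.
by move=> v; rewrite mulmxDr mulmxDl mxE addr_ge0.
Qed.

Lemma psd_sum (R : realType) m I (r : seq I) (P : pred I) (F : I -> 'M[R[i]]_m) :
  (forall i, P i -> psd (F i)) -> psd (\sum_(i <- r | P i) F i).
Proof. by move=> h; apply: (big_ind (@psd R m)) => //; [exact: psd0 | exact: psdD]. Qed.

Lemma psd_cong (R : realType) m p (A : 'M[R[i]]_m) (M : 'M[R[i]]_(m, p)) :
  psd A -> psd (dag M *m A *m M).
Proof.
move=> [hA fA]; split; first by rewrite !dag_mul dagK -hA mulmxA.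
by move=> v; rewrite -!mulmxA mulmxA -dag_mul mulmxA; apply: fA.
Qed.

Lemma sum_ind (R : realType) m (c : 'I_m) (F : 'I_m -> R[i]) :
  \sum_r (r == c)%:R * F r = F c.
Proof.
by rewrite (bigD1 c) //= eqxx mul1r big1 ?addr0 // => r /negbTE ->; rewrite mul0r.
Qed.

Lemma sum_ind' (R : realType) m (c : 'I_m) (F : 'I_m -> R[i]) :
  \sum_r (c == r)%:R * F r = F c.
Proof. by rewrite -[RHS](sum_ind c); apply: eq_bigr => r _; rewrite eq_sym. Qed.

Definition dg (R : realType) m (b : pred 'I_m) : 'M[R[i]]_m :=
  \matrix_(p, q) ((p == q) && b p)%:R.

Lemma psd_dg (R : realType) m (b : pred 'I_m) : psd (dg R b).
Proof.
split.
  apply/matrixP=> p q; rewrite /dag !mxE conjC_nat.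
  by rewrite (eq_sym q p); case: eqP => [->|].
move=> v; rewrite mxE sumr_ge0 // => q _; rewrite mxE.
rewrite (eq_bigr (fun p => (p == q)%:R * ((dag v) 0 p * (b q)%:R))); last first.
  move=> p _; rewrite /dg !mxE; case: (p =P q) => [->|/eqP/negbTE ne]; rewrite ?eqxx ?ne /= ?mul1r ?mulr0 ?mul0r //.
rewrite (sum_ind (R:=R)) /dag !mxE -mulrA mulrCA mulrC -mulrA.
by rewrite mulrA [_^* * _]mulrC -normCK mulr_ge0 // exprn_ge0.
Qed.

Lemma sum_ind_r (R : realType) m (c : 'I_m) (F : 'I_m -> R[i]) :
  \sum_r F r * (r == c)%:R = F c.
Proof. by rewrite -[RHS](sum_ind c); apply: eq_bigr => r _; rewrite mulrC. Qed.

Definition chan (R : realType) d (f : 'I_d -> 'I_d) (X : 'M[R[i]]_d) : 'M[R[i]]_d :=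
  \matrix_(a, b) ((a == b)%:R * \sum_k (f k == a)%:R * X k k).

Lemma chan_lin (R : realType) d (f : 'I_d -> 'I_d) (a : R[i]) (X Y : 'M[R[i]]_d) :
  chan f (a *: X + Y) = a *: chan f X + chan f Y.
Proof.
apply/matrixP=> p q; rewrite !mxE mulrCA -mulrDr; congr (_ * _).
rewrite mulr_sumr -big_split; apply: eq_bigr => k _; rewrite !mxE.
by rewrite mulrDr mulrCA.
Qed.

Lemma chan_tr (R : realType) d (f : 'I_d -> 'I_d) (X : 'M[R[i]]_d) :
  \tr (chan f X) = \tr X.
Proof.
rewrite /mxtrace (eq_bigr (fun a => \sum_k (f k == a)%:R * X k k)); last first.
  by move=> a _; rewrite mxE eqxx mul1r.
rewrite exchange_big /=; apply: eq_bigr => k _.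
exact: (sum_ind' (f k) (fun _ => X k k)).
Qed.

Definition Mc (R : realType) k d (f : 'I_d -> 'I_d) (c : 'I_d) : 'M[R[i]]_(k * d) :=
  \matrix_(r, p) (((mxtens_unindex p).2 == f c)%:R *
                  (r == mxtens_index ((mxtens_unindex p).1, c))%:R).

Lemma chan_cp_eq (R : realType) k d (f : 'I_d -> 'I_d) (X : 'M[R[i]]_(k * d)) :
  idtens (chan f) X = \sum_c dag (Mc R k f c) *m X *m Mc R k f c.
Proof.
apply/matrixP=> p q; rewrite -(mxtens_unindexK p) -(mxtens_unindexK q).
move: (mxtens_unindex p) (mxtens_unindex q) => [i a] [j b].
rewrite summxE !mxE !mxtens_indexK /= mulr_sumr; apply: eq_bigr => c _.
rewrite mxE [RHS]mxE.
under eq_bigr => s _ do rewrite !mxE mxtens_indexK mulrA.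
rewrite sum_ind_r.
under eq_bigr => r _ do rewrite /dag !mxE mxtens_indexK rmorphM /= !conjC_nat mulrAC.
rewrite sum_ind_r /=.
case: (a =P b) => [<-|/eqP/negbTE ne].
  by rewrite mul1r (eq_sym (f c)); case: (a == f c); rewrite ?mul0r ?mulr0 ?mul1r ?mulr1.
rewrite mul0r; case: (a =P f c) => [eq|]; last by rewrite !mul0r.
by rewrite -eq eq_sym ne mulr0.
Qed.

Lemma chan_cp (R : realType) k d (f : 'I_d -> 'I_d) (X : 'M[R[i]]_(k * d)) :
  psd X -> psd (idtens (chan f) X).
Proof. by move=> hX; rewrite chan_cp_eq; apply: psd_sum => c _; apply: psd_cong. Qed.

Lemma chan_is_channel (R : realType) n (f : 'I_(qdim n) -> 'I_(qdim n)) :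
  is_channel (chan (R:=R) f).
Proof. split; [exact: chan_lin | move=> k X; exact: chan_cp | exact: chan_tr]. Qed.


Definition Et (R : realType) d (i0 a0 : 'I_d) : 'M[R[i]]_(d * d) :=
  dg R (fun p => p == mxtens_index (i0, a0)).

Lemma Et_test (R : realType) n (i0 a0 : 'I_(qdim n)) : channel_test (Et R i0 a0).
Proof.
split; first exact: psd_dg.
exists (dg R (fun a => a == i0)); split; first split.
- exact: psd_dg.
- rewrite /mxtrace (eq_bigr (fun a => (a == i0)%:R * 1)).
    by rewrite (sum_ind (R:=R)).
  by move=> a _; rewrite mxE eqxx mulr1.
rewrite /loewner.
have -> : dg R (fun a => a == i0) *t 1%:M - Et R i0 a0 =
    dg R (fun p => ((mxtens_unindex p).1 == i0) && ((mxtens_unindex p).2 != a0)).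
  apply/matrixP=> p q; rewrite -(mxtens_unindexK p) -(mxtens_unindexK q).
  move: (mxtens_unindex p) (mxtens_unindex q) => [i a] [j b].
  rewrite mxE tensmxE.
  rewrite !mxE !mxtens_indexK /= !(inj_eq (can_inj (@mxtens_indexK _ _))) !xpair_eqE.
  by case: (i == j); case: (a == b); case: (i == i0); case: (a == a0);
    rewrite /= ?mulr1 ?mul0r ?mulr0 ?subrr ?subr0.
exact: psd_dg.
Qed.

Lemma natr_and (R : realType) (x y : bool) : ((x && y)%:R : R[i]) = x%:R * y%:R.
Proof. by case: x; case: y; rewrite /= ?(mul1r, mul0r, mulr1, mulr0). Qed.

Lemma choiE (R : realType) n (N : 'M[R[i]]_(qdim n) -> 'M[R[i]]_(qdim n)) i j a b :
  choi N (mxtens_index (i, a)) (mxtens_index (j, b)) = N (delta_mx i j) a b.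
Proof.
rewrite /choi summxE (eq_bigr (fun a' => (i == a')%:R * N (delta_mx a' j) a b)).
  by rewrite (sum_ind' (R:=R)).
move=> a' _.
rewrite summxE (eq_bigr (fun b' => (i == a')%:R * ((j == b')%:R * N (delta_mx a' b') a b))).
  by rewrite -mulr_sumr (sum_ind' (R:=R)).
by move=> b' _; rewrite tensmxE mxE natr_and -mulrA.
Qed.

Lemma tr_dg (R : realType) m (b : pred 'I_m) (A : 'M[R[i]]_m) :
  \tr (dg R b *m A) = \sum_p (b p)%:R * A p p.
Proof.
rewrite /mxtrace; apply: eq_bigr => p _; rewrite mxE (bigD1 p) //= big1 => [|q ne].
  by rewrite mxE eqxx addr0.
by rewrite mxE eq_sym (negbTE ne) mul0r.
Qed.

Lemma chan_delta (R : realType) d (f : 'I_d -> 'I_d) (a b : 'I_d) :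
  chan (R:=R) f (delta_mx a b) = (a == b)%:R *: delta_mx (f a) (f a).
Proof.
apply/matrixP=> p q; rewrite !mxE.
under eq_bigr => k _ do rewrite mxE natr_and mulrA.
rewrite (sum_ind_r (R:=R)) natr_and mulrA.
case: (b =P a) => [->|/eqP ne]; last by rewrite (eq_sym a b) (negbTE ne) mulr0 mul0r.
rewrite eqxx mulr1 mul1r (eq_sym (f a)).
case: (p =P f a) => [->|/eqP ne2]; first by rewrite mulr1 mul1r eq_sym.
by rewrite mulr0 mul0r.
Qed.

Lemma Et_value (R : realType) n (f : 'I_(qdim n) -> 'I_(qdim n)) (i0 a0 : 'I_(qdim n)) :
  test_value (chan (R:=R) f) (Et R i0 a0) = (f i0 == a0)%:R.
Proof.
rewrite /test_value /Et tr_dg (sum_ind (R:=R)) choiE chan_delta eqxx scale1r mxE.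
by rewrite andbb eq_sym; case: (f i0 == a0).
Qed.

Fixpoint adv (R : realType) n (L : learner R n) (a0 : 'I_(qdim n))
  (h : seq ('M[R[i]]_(qdim n * qdim n) * R)) (s : seq 'I_(qdim n)) : seq bool :=
  match s with
  | [::] => [::]
  | i :: s' => let b := (1 / 2 <= L h (Et R i a0)) in
      b :: adv L a0 (rcons h (Et R i a0, if b then 0 else 1)) s'
  end.

Lemma size_adv (R : realType) n (L : learner R n) a0 h s : size (adv L a0 h s) = size s.
Proof. by elim: s h => [|i s IH] h //=; rewrite IH. Qed.

Lemma mist (R : realType) n (L : learner R n) (a0 : 'I_(qdim n)) (eps : R)
  (N : 'M[R[i]]_(qdim n) -> 'M[R[i]]_(qdim n)) (g : 'I_(qdim n) -> bool) :
  (forall i, test_value N (Et R i a0) = if g i then 0 else 1) -> eps < 1 / 2 ->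
  forall s h, map g s = adv L a0 h s ->
  mistakes L N eps h (map (fun i => Et R i a0) s) = size s.
Proof.
move=> hv he; elim=> [|i s IH] h //= [gi gs].
rewrite hv gi (IH _ gs).
suff -> : eps < `|L h (Et R i a0) - (if 1 / 2 <= L h (Et R i a0) then 0 else 1)| by [].
case: ifP => hp.
  rewrite subr0; apply: (lt_le_trans he); apply: (le_trans hp); exact: ler_norm.
apply: (lt_le_trans he); rewrite distrC; apply: le_trans (ler_norm _).
move/negbT: hp; rewrite -ltNge => hp.
lra.
Qed.

Lemma map_nth_enum (T : Type) (x0 : T) m (s : seq T) : size s = m ->
  map (fun i : 'I_m => nth x0 s i) (enum 'I_m) = s.
Proof.
move=> hs; rewrite -[RHS](mkseq_nth x0) /mkseq -hs -val_enum_ord -map_comp.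
by rewrite hs.
Qed.

Theorem corollary4p3 (R : realType) (eps : R) :
  0 <= eps < 1 / 2 ->
  exists c : R, 0 < c /\
  exists n0 : nat, forall n : nat, (n0 <= n)%N ->
  forall L : learner R n, (forall h E, 0 <= L h E <= 1) ->
  exists N : 'M[R[i]]_(qdim n) -> 'M[R[i]]_(qdim n),
    is_channel N /\
    exists Es : seq 'M[R[i]]_(qdim n * qdim n),
      (forall E, E \in Es -> channel_test E) /\
      c * (2 ^ n)%:R <= (mistakes L N eps [::] Es)%:R.
Proof.
case/andP=> _ he; exists 1; split; first exact: ltr01.
exists 1%N => n hn L _.
have h0 : (0 < qdim n)%N by rewrite /qdim expn_gt0.
have h1 : (1 < qdim n)%N by rewrite /qdim -{1}(expn0 2) ltn_exp2l.
pose a0 : 'I_(qdim n) := Ordinal h0.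
pose a1 : 'I_(qdim n) := Ordinal h1.
pose g (i : 'I_(qdim n)) := nth false (adv L a0 [::] (enum 'I_(qdim n))) i.
pose f (i : 'I_(qdim n)) := if g i then a1 else a0.
exists (chan (R:=R) f); split; first exact: chan_is_channel.
exists (map (fun i => Et R i a0) (enum 'I_(qdim n))); split.
  by move=> E /mapP [i _ ->]; apply: Et_test.
rewrite (@mist R n L a0 eps _ g) //.
- by rewrite size_enum_ord mul1r.
- by move=> i; rewrite Et_value /f; case: (g i).
- by rewrite map_nth_enum // size_adv size_enum_ord.
Qed.
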